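(* There exist five nonzero vectors $\{\phi_i\}_{i=1}^5$ in $\mathbb R^3$ which fail to do phase retrieval, but whose induced hyperplanes $\{\phi_i^\perp\}_{i=1}^5$ do phase retrieval on $\mathbb R^3$.
   Context: A family of vectors $\{\phi_i\}$ in $\mathbb R^d$ does phase retrieval if $|\langle x,\phi_i\rangle|=|\langle y,\phi_i\rangle|$ for all $i$ implies $x=\pm y$. A family of subspaces $\{W_i\}$ with orthogonal projections $P_i$ does phase retrieval if $\|P_ix\|=\|P_iy\|$ for all $i$ implies $x=\pm y$. Here $\phi_i^\perp=\{x\in\mathbb R^3:\langle x,\phi_i\rangle=0\}$. *)

(* Defs.v *)
From mathcomp Require Import all_boot all_order all_algebra.
From mathcomp Require Import reals.
Set Implicit Arguments. Unset Strict Implicit. Unset Printing Implicit Defensive.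
Import Order.TTheory GRing.Theory Num.Theory.
Local Open Scope ring_scope.

Section PR.
Variable R : realType.
Variable d : nat.
Notation vec := 'rV[R]_d.

Definition dotv (x y : vec) : R := \sum_(k < d) x ord0 k * y ord0 k.
Definition normv (x : vec) : R := Num.sqrt (dotv x x).

Definition vec_phase_retrieval (I : finType) (phi : I -> vec) : Prop :=
  forall x y : vec, (forall i, `|dotv x (phi i)| = `|dotv y (phi i)|) ->
    x = y \/ x = - y.

Definition is_orth_proj (W : vec -> Prop) (P : vec -> vec) : Prop :=
  forall x, W (P x) /\ (forall w, W w -> dotv (x - P x) w = 0).

(* Subspace phase retrieval, with P_i the orthogonal projections onto W_i;
   we also require the projections to exist so the notion is not vacuous. *)
Definition subspace_phase_retrieval (I : finType) (W : I -> vec -> Prop) : Prop :=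
  (exists P : I -> vec -> vec, forall i, is_orth_proj (W i) (P i)) /\
  forall P : I -> vec -> vec, (forall i, is_orth_proj (W i) (P i)) ->
    forall x y : vec, (forall i, normv (P i x) = normv (P i y)) ->
      x = y \/ x = - y.

Definition perp (phi : vec) : vec -> Prop := fun x => dotv x phi = 0.

End PR.

(* Main.v *)
Require Import Defs.
From mathcomp Require Import all_boot all_order all_algebra.
From mathcomp Require Import reals.
From mathcomp Require Import ring lra.
Import Order.TTheory GRing.Theory Num.Theory.
Local Open Scope ring_scope.
Section S.
Variable R : realType.
Definition c0 : 'I_3 := @Ordinal 3 0 isT.
Definition c1 : 'I_3 := @Ordinal 3 1 isT.
Definition c2 : 'I_3 := @Ordinal 3 2 isT.
Lemma dot3 (x y : 'rV[R]_3) : dotv x y = x ord0 c0 * y ord0 c0 + x ord0 c1 * y ord0 c1 + x ord0 c2 * y ord0 c2.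
Proof.
rewrite /dotv !big_ord_recr big_ord0 /= add0r.
by congr (x _ _ * y _ _ + x _ _ * y _ _ + x _ _ * y _ _); apply: val_inj.
Qed.
Lemma row3 (x y : 'rV[R]_3) : x ord0 c0 = y ord0 c0 -> x ord0 c1 = y ord0 c1 -> x ord0 c2 = y ord0 c2 -> x = y.
Proof.
move=> h0 h1 h2; apply/rowP => j.
case: j => [[|[|[|//]]] Hj].
- by rewrite (_ : Ordinal Hj = c0) //; apply: val_inj.
- by rewrite (_ : Ordinal Hj = c1) //; apply: val_inj.
- by rewrite (_ : Ordinal Hj = c2) //; apply: val_inj.
Qed.
Lemma sq_pm (a b : R) : a^+2 = b^+2 -> a = b \/ a = -b.
Proof.
move=> h; have : (a - b) * (a + b) = 0 by rewrite mulrDr !mulrBl; lra.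
by move/eqP; rewrite mulf_eq0 => /orP[/eqP ?|/eqP ?]; [left|right]; lra.
Qed.
Lemma mixed (a b p q : R) : (a = p /\ b = -q) \/ (a = -p /\ b = q) -> a*b = p*q -> p = 0 \/ q = 0.
Proof.
move=> H e; have : 2 * (p * q) = 0.
  by case: H => [[-> ->]|[-> ->]] in e *; lra.
by move/eqP; rewrite !mulf_eq0 => /orP[/eqP ?|/orP[/eqP ?|/eqP ?]]; [lra|left|right].
Qed.
Lemma key (x1 x2 x3 y1 y2 y3 : R) :
  let c := x1^+2+x2^+2+x3^+2 - (y1^+2+y2^+2+y3^+2) in
  x3^+2 - y3^+2 = c ->
  (x1+2*x2)^+2 - (y1+2*y2)^+2 = 5*c ->
  (x1-2*x2)^+2 - (y1-2*y2)^+2 = 5*c ->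
  (x1+2*x2+x3)^+2 - (y1+2*y2+y3)^+2 = 6*c ->
  (x1-2*x2+x3)^+2 - (y1-2*y2+y3)^+2 = 6*c ->
  (x1 = y1 /\ x2 = y2 /\ x3 = y3) \/ (x1 = -y1 /\ x2 = -y2 /\ x3 = -y3).
Proof.
move=> c e1 e2 e3 e4 e5.
have a12 : x1*x2 - y1*y2 = 0 by lra.
have a13 : x1*x3 - y1*y3 = 0 by lra.
have a23 : x2*x3 - y2*y3 = 0 by lra.
have a11 : x1^+2 - y1^+2 = -(5/3) * c by rewrite /c in e1 e2 e3 *; lra.
have a22 : x2^+2 - y2^+2 = (5/3) * c by rewrite /c in e1 e2 e3 *; lra.
have det : (x1^+2 - y1^+2) * (x2^+2 - y2^+2) * (x3^+2 - y3^+2) +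
   2 * (x1*x2 - y1*y2) * (x2*x3 - y2*y3) * (x1*x3 - y1*y3)
   - (x1^+2 - y1^+2) * (x2*x3 - y2*y3)^+2 - (x2^+2 - y2^+2) * (x1*x3 - y1*y3)^+2
   - (x3^+2 - y3^+2) * (x1*x2 - y1*y2)^+2 = 0 by ring.
rewrite a12 a13 a23 a11 a22 e1 in det.
have c0' : c = 0.
  have : c ^+ 3 = 0 by lra.
  by move/eqP; rewrite expf_eq0 /= => /eqP.
rewrite c0' in a11 a22 e1.
have s1 := sq_pm x1 y1 ltac:(lra).
have s2 := sq_pm x2 y2 ltac:(lra).
have s3 := sq_pm x3 y3 ltac:(lra).
have m12 : x1*x2 = y1*y2 by lra.
have m13 : x1*x3 = y1*y3 by lra.
have m23 : x2*x3 = y2*y3 by lra.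
case: s1 => s1; case: s2 => s2; case: s3 => s3;
 (try have := mixed x1 x2 y1 y2 ltac:(by [left|right]) m12);
 (try have := mixed x1 x3 y1 y3 ltac:(by [left|right]) m13);
 (try have := mixed x2 x3 y2 y3 ltac:(by [left|right]) m23);
 repeat (let H := fresh in move=> H; case: H => ?);
 first [left; split; [|split]; lra | right; split; [|split]; lra].
Qed.

Definition proj (phi x : 'rV[R]_3) : 'rV[R]_3 := x - (dotv x phi / dotv phi phi) *: phi.

Lemma dot_ge0 (x : 'rV[R]_3) : 0 <= dotv x x.
Proof. rewrite dot3; have := sqr_ge0 (x ord0 c0); have := sqr_ge0 (x ord0 c1); have := sqr_ge0 (x ord0 c2); rewrite !expr2; lra. Qed.

Lemma dot_eq0 (x : 'rV[R]_3) : dotv x x = 0 -> x = 0.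
Proof.
rewrite dot3 => h.
have := sqr_ge0 (x ord0 c0); have := sqr_ge0 (x ord0 c1); have := sqr_ge0 (x ord0 c2); rewrite !expr2 => h2 h1 h0.
have e0 : x ord0 c0 * x ord0 c0 = 0 by lra.
have e1 : x ord0 c1 * x ord0 c1 = 0 by lra.
have e2 : x ord0 c2 * x ord0 c2 = 0 by lra.
apply: row3; rewrite mxE; apply/eqP; rewrite -[_ == 0]orbb -mulf_eq0; apply/eqP; [exact e0|exact e1|exact e2].
Qed.

Lemma proj_ok (phi : 'rV[R]_3) : dotv phi phi != 0 -> is_orth_proj (perp phi) (proj phi).
Proof.
move=> nz x; split.
  rewrite /perp /proj; move: nz; rewrite !dot3 !mxE => nz; field; exact nz.
move=> w; rewrite /perp /proj !dot3 !mxE => hw.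
set t := (_ / _); clearbody t.
transitivity (t * (w ord0 c0 * phi ord0 c0 + w ord0 c1 * phi ord0 c1 + w ord0 c2 * phi ord0 c2)); first ring.
by rewrite hw mulr0.
Qed.

Lemma proj_uniq (phi : 'rV[R]_3) P x : dotv phi phi != 0 -> is_orth_proj (perp phi) P -> P x = proj phi x.
Proof.
move=> nz hP.
have [hq hq2] := proj_ok phi nz x.
have [hp hp2] := hP x.
have hw : perp phi (proj phi x - P x).
  move: hq hp; rewrite /perp !dot3 !mxE; lra.
have := hq2 _ hw; have := hp2 _ hw.
move: (proj phi x) (P x) => q p.
rewrite !dot3 !mxE => e1 e2.
apply/eqP; rewrite eq_sym -subr_eq0; apply/eqP; apply: dot_eq0.
rewrite dot3 !mxE. lra.
Qed.

Lemma proj_norm (phi x : 'rV[R]_3) : dotv phi phi != 0 ->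
  dotv (proj phi x) (proj phi x) = dotv x x - (dotv x phi)^+2 / dotv phi phi.
Proof.
rewrite /proj !dot3 !mxE => nz; field; exact nz.
Qed.


Lemma eq_from_norm (phi : 'rV[R]_3) P x y : dotv phi phi != 0 -> is_orth_proj (perp phi) P ->
  normv (P x) = normv (P y) ->
  (dotv x phi)^+2 - (dotv y phi)^+2 = dotv phi phi * (dotv x x - dotv y y).
Proof.
move=> nz hP; rewrite /normv !(proj_uniq phi P _ nz hP) => /eqP.
rewrite eqr_sqrt ?dot_ge0 // !proj_norm // => /eqP e.
have -> : dotv x x - dotv y y = (dotv x phi)^+2 / dotv phi phi - (dotv y phi)^+2 / dotv phi phi by lra.
by rewrite mulrBr ![dotv phi phi * (_ / _)]mulrC !divfK.
Qed.

Definition mk3 (a b c : R) : 'rV[R]_3 := \row_(j < 3) [:: a; b; c]`_j.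
Definition phis (i : 'I_5) : 'rV[R]_3 :=
  [:: mk3 0 0 1; mk3 1 2 0; mk3 1 (-2) 0; mk3 1 2 1; mk3 1 (-2) 1]`_i.

Lemma phis_nz i : dotv (phis i) (phis i) != 0.
Proof.
case: i => [[|[|[|[|[|//]]]]] Hi]; rewrite dot3 /phis /= !mxE /=; apply/eqP; lra.
Qed.

End S.

Theorem mainTheorem6 (R : realType) :
  exists phi : 'I_5 -> 'rV[R]_3,
    (forall i, phi i != 0) /\
    ~ vec_phase_retrieval phi /\
    subspace_phase_retrieval (fun i => perp (phi i)).
Proof.
exists (@phis R); split; [|split].
- move=> i; apply/eqP => h; have := phis_nz R i; by rewrite h dot3 !mxE !mulr0 !addr0 eqxx.
- move=> h; have := h (mk3 R 2 0 0) (mk3 R 0 1 0).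
  have H : forall i, `|dotv (mk3 R 2 0 0) (phis R i)| = `|dotv (mk3 R 0 1 0) (phis R i)|.
    case=> [[|[|[|[|[|//]]]]] Hi]; rewrite !dot3 /phis /= !mxE /=;
      first [ congr (`|_|); lra | rewrite -normrN; congr (`|_|); lra].
  move/(_ H); case=> /(congr1 (fun v : 'rV[R]_3 => v ord0 c0)); rewrite !mxE /=; lra.
- split.
    by exists (fun i => proj R (phis R i)) => i; exact: (proj_ok R (phis R i) (phis_nz R i)).
  move=> P hP x y hn.
  have E := fun i => eq_from_norm R (phis R i) (P i) x y (phis_nz R i) (hP i) (hn i).
  have E0 := E (@Ordinal 5 0 isT); have E1 := E (@Ordinal 5 1 isT);
  have E2 := E (@Ordinal 5 2 isT); have E3 := E (@Ordinal 5 3 isT);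
  have E4 := E (@Ordinal 5 4 isT).
  rewrite !dot3 /phis /= !mxE /= in E0 E1 E2 E3 E4.
  have K := key R (x ord0 c0) (x ord0 c1) (x ord0 c2) (y ord0 c0) (y ord0 c1) (y ord0 c2).
  cbv zeta in K.
  rewrite !expr2 in E0 E1 E2 E3 E4 K.
  have [h|h] := K ltac:(lra) ltac:(lra) ltac:(lra) ltac:(lra) ltac:(lra); move: h.
  + by case=> [? [? ?]]; left; apply: (@row3 R).
  + by case=> [? [? ?]]; right; apply: (@row3 R); rewrite mxE.
Qed.
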